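(* Let $a=1$. Define $\boldsymbol{\alpha}_0=\boldsymbol{\beta}_0=1$ and, for $n\ge1$, \[ \boldsymbol{\alpha}_n(1,k)=(-1)^n(q^{-n}+q^{n}),\qquad \boldsymbol{\beta}_n(1,k)=(-1)^n\frac{(k^2;q^2)_{n}(1+kq^{2n})}{(1+k)q^n(q^2;q^2)_n}. \] Then $(\boldsymbol{\alpha}_n(1,k),\boldsymbol{\beta}_n(1,k))$ is a WP-Bailey pair relative to $a=1$.
   Context: Notation: $(x;q)_n=\prod_{i=0}^{n-1}(1-xq^i)$. A pair of sequences $(\boldsymbol{\alpha}_n(a,k,q),\boldsymbol{\beta}_n(a,k,q))_{n\ge0}$ is a WP-Bailey pair (relative to $a$, with parameter $k$) if $\boldsymbol{\alpha}_0=1$ and for all $n\ge0$ \[\boldsymbol{\beta}_n=\sum_{j=0}^n\frac{(k/a;q)_{n-j}(k;q)_{n+j}}{(q;q)_{n-j}(aq;q)_{n+j}}\boldsymbol{\alpha}_j.\] *)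

(* Defs.v *)
From HB Require Import structures.
From mathcomp Require Import all_boot all_order all_algebra.
Set Implicit Arguments. Unset Strict Implicit. Unset Printing Implicit Defensive.
Import Order.TTheory GRing.Theory Num.Theory.
Local Open Scope ring_scope.

Definition qpoch (F : fieldType) (x q : F) (n : nat) : F :=
  \prod_(i < n) (1 - x * q ^+ i).

Definition is_WP_Bailey_pair (F : fieldType) (a k q : F)
  (alpha beta : nat -> F) : Prop :=
  alpha 0%N = 1 /\
  forall n : nat,
    beta n = \sum_(j < n.+1)
      (qpoch (k / a) q (n - j) * qpoch k q (n + j))
        / (qpoch q q (n - j) * qpoch (a * q) q (n + j)) * alpha j.

Definition alpha_1 (F : fieldType) (k q : F) (n : nat) : F :=
  if n == 0%N then 1 else (-1) ^+ n * (q ^- n + q ^+ n).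

Definition beta_1 (F : fieldType) (k q : F) (n : nat) : F :=
  if n == 0%N then 1 else
    (-1) ^+ n * (qpoch (k ^+ 2) (q ^+ 2) n * (1 + k * q ^+ (2 * n)))
      / ((1 + k) * q ^+ n * qpoch (q ^+ 2) (q ^+ 2) n).

(* Main.v *)
Require Import Defs.
From HB Require Import structures.
From mathcomp Require Import all_boot all_order all_algebra.
From mathcomp Require Import ring zify.
Import GRing.Theory.
Local Open Scope ring_scope.

Section Aux.
Variables (F : fieldType) (k q : F).
Hypothesis hq0 : q != 0.
Hypothesis hqroot : forall m : nat, (0 < m)%N -> q ^+ m != 1.
Hypothesis hk : 1 + k != 0.

Lemma qpochS (x : F) n : qpoch x q n.+1 = qpoch x q n * (1 - x * q ^+ n).
Proof. by rewrite /qpoch big_ord_recr. Qed.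

Lemma qpoch0 (x r : F) : qpoch x r 0 = 1.
Proof. by rewrite /qpoch big_ord0. Qed.

Lemma one_sub_qpow n : 1 - q * q ^+ n != 0.
Proof. by rewrite -exprS subr_eq0 eq_sym hqroot. Qed.

Lemma qpochq_neq0 n : qpoch q q n != 0.
Proof. by apply/prodf_neq0 => i _; apply: one_sub_qpow. Qed.

Lemma one_sub_q2pow n : 1 - q ^+ 2 * (q ^+ 2) ^+ n != 0.
Proof. by rewrite -exprM -exprD subr_eq0 eq_sym hqroot // addn_gt0. Qed.

Lemma qpochq2_neq0 n : qpoch (q ^+ 2) (q ^+ 2) n != 0.
Proof. by apply/prodf_neq0 => i _; apply: one_sub_q2pow. Qed.

Definition bb i := qpoch k q i / qpoch q q i.

Lemma bbS i : bb i.+1 * (1 - q * q ^+ i) = bb i * (1 - k * q ^+ i).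
Proof.
rewrite /bb !qpochS.
have h1 := qpochq_neq0 i. have h2 := one_sub_qpow i.
by field; rewrite h1 h2.
Qed.

Definition DD m (x y : F) :=
  \sum_(0 <= i < m.+1) bb i * x ^+ i * (bb (m - i) * y ^+ (m - i)).

Lemma DD_sym m x y : DD m x y = DD m y x.
Proof.
rewrite /DD big_nat_rev /=.
apply: eq_big_nat => i /andP [_ hi].
rewrite add0n subSS subKn; last by rewrite -ltnS.
by rewrite mulrC.
Qed.

Lemma DD_hom m c x y : DD m (c * x) (c * y) = c ^+ m * DD m x y.
Proof.
rewrite /DD mulr_sumr; apply: eq_big_nat => i /andP [_ hi].
have e : c ^+ m = c ^+ i * c ^+ (m - i).
  by rewrite -exprD subnKC // -ltnS.
rewrite e !exprMn; ring.
Qed.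

Lemma DD_shiftx m x y :
  DD m.+1 x y - DD m.+1 (q * x) y = x * (DD m x y - k * DD m (q * x) y).
Proof.
rewrite /DD !(big_nat_recl m.+1) // !expr0 !subn0 !mulr1.

rewrite opprD addrACA subrr add0r -sumrB mulrBr mulrA !mulr_sumr -sumrB.
apply: eq_big_nat => i /andP [_ hi].
rewrite subSS.
have e := bbS i.
rewrite !exprS !exprMn.
transitivity (bb i.+1 * (1 - q * q ^+ i) * x * x ^+ i * (bb (m - i) * y ^+ (m - i))).
  ring.
rewrite e; ring.
Qed.

Lemma DD_shifty m x y :
  DD m.+1 x y - DD m.+1 x (q * y) = y * (DD m x y - k * DD m x (q * y)).
Proof. by rewrite ![DD _ x _]DD_sym DD_shiftx. Qed.

Definition AA m := DD m (-1) 1.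
Definition BB m := DD m (- q) 1.

Lemma E1 m : AA m.+1 - BB m.+1 = k * BB m - AA m.
Proof.
rewrite /AA /BB -[- q]mulrN1 DD_shiftx; ring.
Qed.

Lemma E2 m : BB m.+1 - q ^+ m.+1 * AA m.+1 = BB m - k * q ^+ m * AA m.
Proof.
have h := DD_shifty m (- q) 1.
have H j : DD j (- q) (q * 1) = q ^+ j * AA j by rewrite /AA -DD_hom mulrN1.
rewrite !H in h. rewrite /BB.
by rewrite /BB h mul1r mulrA.
Qed.

Lemma uniq2 (X1 Y1 X2 Y2 r s c : F) : 1 - c != 0 ->
  X1 - Y1 = r -> Y1 - c * X1 = s -> X2 - Y2 = r -> Y2 - c * X2 = s ->
  X1 = X2 /\ Y1 = Y2.
Proof.
move=> hc h1 h2 h3 h4.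
have hX : (X1 - X2) * (1 - c) = 0.
  transitivity ((X1 - Y1) - (X2 - Y2) + ((Y1 - c * X1) - (Y2 - c * X2))).
    ring.
  by rewrite h1 h2 h3 h4; ring.
move/eqP: hX; rewrite mulf_eq0 (negbTE hc) orbF subr_eq0 => /eqP hX.
split => //.
have e1 : Y1 = X1 - r by rewrite -h1; ring.
have e2 : Y2 = X2 - r by rewrite -h3; ring.
by rewrite e1 e2 hX.
Qed.

Definition PP n := qpoch (k ^+ 2) (q ^+ 2) n.
Definition QQ n := qpoch (q ^+ 2) (q ^+ 2) n.

Lemma PPS n : PP n.+1 = PP n * (1 - k ^+ 2 * (q ^+ 2) ^+ n).
Proof. by rewrite /PP /qpoch big_ord_recr. Qed.
Lemma QQS n : QQ n.+1 = QQ n * (1 - q ^+ 2 * (q ^+ 2) ^+ n).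
Proof. by rewrite /QQ /qpoch big_ord_recr. Qed.

Lemma closed_forms n :
  AA (2 * n) = PP n / QQ n /\
  BB (2 * n) = PP n / QQ n * (1 + k * (q ^+ 2) ^+ n) / (1 + k).
Proof.
elim: n => [|n [IA IB]].
  rewrite muln0 /AA /BB /DD /PP /QQ /bb !big_nat1 !qpoch0 !expr0 !divr1 !mulr1.
  by split => //; rewrite mul1r divff.

have hQ : QQ n != 0 := qpochq2_neq0 n. have hQ' := one_sub_q2pow n.
have hc1 : 1 - q ^+ (2 * n).+1 != 0 by rewrite subr_eq0 eq_sym hqroot.
have hc2 : 1 - q ^+ (2 * n).+2 != 0 by rewrite subr_eq0 eq_sym hqroot.
have q2n : q ^+ (2 * n) = (q ^+ 2) ^+ n by rewrite exprM.
have [OA OB] : AA (2 * n).+1 = 0 /\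
    BB (2 * n).+1 = PP n / QQ n * (1 - k ^+ 2 * (q ^+ 2) ^+ n) / (1 + k).
  apply: (uniq2 _ _ _ _ _ _ _ hc1 (E1 (2 * n)) (E2 (2 * n))).
    by rewrite IA IB; field; rewrite ?hk ?hQ ?hQ'.
  by rewrite IA IB q2n; field; rewrite ?hk ?hQ ?hQ'.
have -> : (2 * n.+1)%N = (2 * n).+2 by rewrite mulnS addnC addn2.
have e1 : (q ^+ 2) ^+ n.+1 = q ^+ 2 * (q ^+ 2) ^+ n by rewrite exprS.
have e2 : q ^+ (2 * n).+2 = q ^+ 2 * (q ^+ 2) ^+ n by rewrite -q2n -exprD addnC addn2.
have e3 : q ^+ (2 * n).+1 = q * (q ^+ 2) ^+ n by rewrite -q2n exprS.
apply: (uniq2 _ _ _ _ _ _ _ hc2 (E1 (2 * n).+1) (E2 (2 * n).+1)).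
  by rewrite OA OB PPS QQS e1; field; rewrite ?hk ?hQ ?hQ'.
by rewrite OA OB PPS QQS e1 e2 e3; field; rewrite ?hk ?hQ ?hQ'.
Qed.

Lemma sign_sq j : (-1) ^+ j * (-1) ^+ j = 1 :> F.
Proof. by rewrite -expr2 sqrr_sign. Qed.

Lemma term1 n t : (t <= n)%N ->
  (- q) ^+ n * ((-1) ^+ t * q ^- t) = (- q) ^+ (n - t).
Proof.
move=> ht.
have -> : (- q) ^+ n = (- q) ^+ (n - t) * ((-1) ^+ t * q ^+ t).
  have e (x : F) : x ^+ n = x ^+ (n - t) * x ^+ t by rewrite -exprD subnK.
  rewrite -[- q]mulN1r !exprMn (e (-1)) (e q); move: (n - t)%N => p; ring.
have hqt : q ^+ t != 0 by rewrite expf_neq0.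
transitivity ((- q) ^+ (n - t) * ((-1) ^+ t * (-1) ^+ t) * (q ^+ t / q ^+ t)).
  move: (n - t)%N => p; ring.
by rewrite sign_sq divff // !mulr1.
Qed.

Lemma term2 n t : (- q) ^+ n * ((-1) ^+ t * q ^+ t) = (- q) ^+ (n + t).
Proof. by rewrite -[- q]mulN1r !exprMn !exprD; ring. Qed.

Lemma key n : BB (2 * n) =
  (- q) ^+ n * \sum_(0 <= j < n.+1) (bb (n - j) * bb (n + j)) * alpha_1 k q j.
Proof.
rewrite /BB /DD (big_cat_nat _ (n := n.+1)) //=; last by lia.
have L1 : \sum_(0 <= i < n.+1) bb i * (- q) ^+ i * (bb (2 * n - i) * 1 ^+ (2 * n - i))
  = (- q) ^+ n * (bb n * bb n) + \sum_(0 <= j < n)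
     (- q) ^+ n * (bb (n - j.+1) * bb (n + j.+1) * ((-1) ^+ j.+1 * q ^- j.+1)).
  rewrite big_nat_rev /= big_nat_recl //; congr (_ + _).
    rewrite subSS subn0 expr1n mulr1.
    have -> : (2 * n - n = n)%N by lia.
    ring.
  apply: eq_big_nat => j /andP [_ hj].
  rewrite add0n subSS expr1n mulr1.
  have -> : (2 * n - (n - j.+1) = n + j.+1)%N by lia.
  rewrite -(term1 _ _ hj). ring.
have L2 : \sum_(n.+1 <= i < (2 * n).+1) bb i * (- q) ^+ i * (bb (2 * n - i) * 1 ^+ (2 * n - i))
  = \sum_(0 <= j < n)
     (- q) ^+ n * (bb (n - j.+1) * bb (n + j.+1) * ((-1) ^+ j.+1 * q ^+ j.+1)).
  rewrite -{1}(add0n n.+1) big_addn.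
  have -> : ((2 * n).+1 - n.+1 = n)%N by lia.
  apply: eq_big_nat => j /andP [_ hj].
  rewrite expr1n mulr1.
  have -> : (2 * n - (j + n.+1) = n - j.+1)%N by lia.
  have -> : (j + n.+1 = n + j.+1)%N by lia.
  rewrite -term2. ring.
rewrite L1 L2 big_nat_recl // /alpha_1 /= mulrDr mulr1 !addn0 subn0 -addrA.
congr (_ + _).
rewrite -big_split mulr_sumr; apply: eq_big_nat => j _ /=.
ring.
Qed.


End Aux.

Theorem mainTheorem8 (F : fieldType) (k q : F)
  (hq0 : q != 0)
  (hqroot : forall m : nat, (0 < m)%N -> q ^+ m != 1)
  (hk : 1 + k != 0) :
  is_WP_Bailey_pair 1 k q (alpha_1 k q) (beta_1 k q).
Proof.
split; first by [].
move=> n.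
rewrite divr1 (mul1r q).
have hc j : qpoch k q (n - j) * qpoch k q (n + j)
    / (qpoch q q (n - j) * qpoch q q (n + j)) = bb _ k q (n - j) * bb _ k q (n + j).
  by rewrite /bb mulf_div.
under eq_bigr do rewrite hc.
rewrite -(big_mkord xpredT (fun j => bb _ k q (n - j) * bb _ k q (n + j) * alpha_1 k q j)).
clear hc; case: n => [|n].
  by rewrite big_nat1 /beta_1 /alpha_1 /bb !qpoch0 !divr1 !mulr1.
set S := \sum_(0 <= j < n.+2) _.
have hK := key _ _ _ hq0 hk n.+1.
have [_ hB] := closed_forms _ _ _ hqroot hk n.+1.
rewrite -/S hB in hK.
have hq' : (- q) ^+ n.+1 != 0 by rewrite expf_neq0 // oppr_eq0.
have -> : S = ((- q) ^+ n.+1)^-1 * (PP _ k q n.+1 / QQ _ q n.+1 * (1 + k * q ^+ 2 ^+ n.+1) / (1 + k)).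
  by rewrite hK mulKf.
have e : ((- q) ^+ n.+1)^-1 = (-1) ^+ n.+1 * (q ^+ n.+1)^-1.
  by rewrite -[- q]mulN1r exprMn invfM -exprVn invrN1.
rewrite /beta_1 /= /PP /QQ e.
have hQ := qpochq2_neq0 _ _ hqroot n.+1.
have hqn : q ^+ n.+1 != 0 by rewrite expf_neq0.
rewrite exprM.
by field; rewrite hQ hqn hk.
Qed.
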